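(* Let $(A,+,\circ)$ be a skew brace of abelian type (possibly infinite). The following are equivalent: (i) $A$ is $*$-nilpotent; (ii) $A$ is right $*$-nilpotent and $(A,\circ)$ is nilpotent; (iii) $A$ is centrally nilpotent.
   Context: A skew brace is a triple $(A,+,\circ)$ where $(A,+)$ and $(A,\circ)$ are groups (written additively for $+$) such that $x\circ(y+z)=(x\circ y)-x+(x\circ z)$ for all $x,y,z\in A$; the common neutral element is $0$. It is of abelian type if $(A,+)$ is abelian. Let $\lambda_x(y)=-x+(x\circ y)$ and $x*y=\lambda_x(y)-y$; $[x,y]_+=x+y-x-y$. For subsets $X,Y$, $X*Y$ is the subgroup of $(A,+)$ generated by $\{x*y\}$. Left and right series: $A^1=A$, $A^{n+1}=A*A^n$; $A^{(1)}=A$, $A^{(n+1)}=A^{(n)}*A$. $A$ is left (resp. right) $*$-nilpotent if $A^n=0$ (resp. $A^{(n)}=0$) for some $n$, and $*$-nilpotent if both. An ideal is a subgroup $I$ of $(A,+)$ with $\lambda_a(I)\subseteq I$ for all $a\in A$ that is normal in both $(A,+)$ and $(A,\circ)$. The center is $\zeta(A)=\{x\in A: x*y=y*x=[x,y]_+=0\ \forall y\in A\}$. $A$ is centrally nilpotent if there is a chain of ideals $0=I_0\leq\dots\leq I_n=A$ with $I_{j+1}/I_j\leq\zeta(A/I_j)$ for all $j$. *)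

(* Defs.v *)
From HB Require Import structures.
From mathcomp Require Import all_boot all_algebra.
Set Implicit Arguments. Unset Strict Implicit. Unset Printing Implicit Defensive.
Import GRing.Theory.
Local Open Scope ring_scope.

(* A skew brace of abelian type: the additive group (A,+) is an abelian group
   (a zmodType, with neutral element 0), and (A,circ) is a group with neutral
   element 0 and inverse map cinv, satisfying the brace compatibility law. *)
Definition is_skew_brace (A : zmodType) (circ : A -> A -> A) (cinv : A -> A) : Prop :=
  [/\ (forall x y z, circ x (circ y z) = circ (circ x y) z),
      (forall x, circ 0 x = x /\ circ x 0 = x),
      (forall x, circ x (cinv x) = 0 /\ circ (cinv x) x = 0) &
      (forall x y z, circ x (y + z) = circ x y - x + circ x z)].

Section SkewBrace.
Variables (A : zmodType) (circ : A -> A -> A) (cinv : A -> A).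

Definition lam (x y : A) : A := - x + circ x y.
Definition bstar (x y : A) : A := lam x y - y.
Definition addcomm (x y : A) : A := x + y - x - y.

Inductive gen_add (S : A -> Prop) : A -> Prop :=
  | ga_in x : S x -> gen_add S x
  | ga_0 : gen_add S 0
  | ga_opp x : gen_add S x -> gen_add S (- x)
  | ga_add x y : gen_add S x -> gen_add S y -> gen_add S (x + y).

Definition star_set (X Y : A -> Prop) : A -> Prop :=
  gen_add (fun z => exists x y, [/\ X x, Y y & z = bstar x y]).

Definition setA : A -> Prop := fun _ => True.

(* left_series n = A^(n+1) : A^1 = A, A^(n+1) = A * A^n *)
Fixpoint left_series (n : nat) : A -> Prop :=
  match n with
  | O => setA
  | S m => star_set setA (left_series m)
  end.

(* right_series n = A^((n+1)) : A^((1)) = A, A^((n+1)) = A^((n)) * A *)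
Fixpoint right_series (n : nat) : A -> Prop :=
  match n with
  | O => setA
  | S m => star_set (right_series m) setA
  end.

Definition is_trivial (X : A -> Prop) : Prop := forall x, X x -> x = 0.

Definition left_star_nilpotent : Prop := exists n, is_trivial (left_series n).
Definition right_star_nilpotent : Prop := exists n, is_trivial (right_series n).
Definition star_nilpotent : Prop := left_star_nilpotent /\ right_star_nilpotent.

Definition circ_comm (x y : A) : A := circ (circ (cinv x) (cinv y)) (circ x y).

Inductive gen_circ (S : A -> Prop) : A -> Prop :=
  | gc_in x : S x -> gen_circ S x
  | gc_1 : gen_circ S 0
  | gc_inv x : gen_circ S x -> gen_circ S (cinv x)
  | gc_mul x y : gen_circ S x -> gen_circ S y -> gen_circ S (circ x y).

(* lower_central n = gamma_(n+1)(A,circ) *)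
Fixpoint lower_central (n : nat) : A -> Prop :=
  match n with
  | O => setA
  | S m => gen_circ (fun z => exists x y, [/\ setA x, lower_central m y & z = circ_comm x y])
  end.

Definition circ_nilpotent : Prop := exists n, is_trivial (lower_central n).

Definition is_ideal (I : A -> Prop) : Prop :=
  I 0 /\ (forall x y, I x -> I y -> I (x - y)) /\
  (forall a x, I x -> I (lam a x)) /\
  (forall a x, I x -> I (a + x - a)) /\
  (forall x y, I x -> I y -> I (circ x (cinv y))) /\
  (forall a x, I x -> I (circ (circ a x) (cinv a))).

(* For an ideal I, the class x + I lies in the center zeta(A/I) of the quotient
   skew brace A/I (whose operations are induced from A, and whose zero is I). *)
Definition in_center_mod (I : A -> Prop) (x : A) : Prop :=
  forall y, [/\ I (bstar x y), I (bstar y x) & I (addcomm x y)].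

Definition centrally_nilpotent : Prop :=
  exists (n : nat) (I : nat -> A -> Prop),
    [/\ (forall x, I 0%N x <-> x = 0),
        (forall x, I n x),
        (forall j, (j <= n)%N -> is_ideal (I j)),
        (forall j, (j < n)%N -> forall x, I j x -> I j.+1 x) &
        (forall j, (j < n)%N -> forall x, I j.+1 x -> in_center_mod (I j) x)].

End SkewBrace.

(* Main.v *)
Require Import Defs.
From mathcomp Require Import all_boot all_algebra zify.
Set Implicit Arguments. Unset Strict Implicit. Unset Printing Implicit Defensive.
Import GRing.Theory.
Local Open Scope ring_scope.

Section Brace.
Variables (A : zmodType) (circ : A -> A -> A) (cinv : A -> A).
Hypothesis hB : is_skew_brace circ cinv.

Local Notation c := circ.
Definition Lk := locked (Defs.lam circ).
Definition Bk := locked (bstar circ).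
Lemma LE : Defs.lam circ = Lk. Proof. by rewrite /Lk -lock. Qed.
Lemma BE : bstar circ = Bk. Proof. by rewrite /Bk -lock. Qed.
Local Notation lam := Lk.
Local Notation bs := Bk.

Lemma cA x y z : c x (c y z) = c (c x y) z.
Proof. by case: hB. Qed.
Lemma c0x x : c 0 x = x.
Proof. by case: hB => _ H _ _; case: (H x). Qed.
Lemma cx0 x : c x 0 = x.
Proof. by case: hB => _ H _ _; case: (H x). Qed.
Lemma cxV x : c x (cinv x) = 0.
Proof. by case: hB => _ _ H _; case: (H x). Qed.
Lemma cVx x : c (cinv x) x = 0.
Proof. by case: hB => _ _ H _; case: (H x). Qed.
Lemma cD x y z : c x (y + z) = c x y - x + c x z.
Proof. by case: hB. Qed.

Lemma lamU x y : lam x y = - x + c x y.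
Proof. by rewrite -LE. Qed.
Lemma bsU x y : bs x y = lam x y - y.
Proof. by rewrite -LE -BE. Qed.
Lemma cD' x y z : c x (y + z) = c x y - x + c x z.
Proof. rewrite cD; reflexivity. Qed.

Lemma cE x y : c x y = x + lam x y.
Proof. by rewrite lamU addrA subrr add0r. Qed.
Lemma lamD x y z : lam x (y + z) = lam x y + lam x z.
Proof. by rewrite !lamU cD' !addrA. Qed.
Lemma lam0 x : lam x 0 = 0.
Proof. by rewrite lamU cx0 addNr. Qed.
Lemma lamN x y : lam x (- y) = - lam x y.
Proof. by apply/eqP; rewrite -subr_eq0 opprK -lamD addNr lam0. Qed.
Lemma lamB x y z : lam x (y - z) = lam x y - lam x z.
Proof. by rewrite lamD lamN. Qed.
Lemma lam_c x y z : lam (c x y) z = lam x (lam y z).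
Proof.
rewrite {1}lamU -cA [c y z]cE cD'.
by rewrite [RHS]lamU !addrA addNr add0r.
Qed.
Lemma lam0x z : lam 0 z = z.
Proof. by rewrite lamU c0x oppr0 add0r. Qed.
Lemma lamVK x z : lam (cinv x) (lam x z) = z.
Proof. by rewrite -lam_c cVx lam0x. Qed.
Lemma lamKV x z : lam x (lam (cinv x) z) = z.
Proof. by rewrite -lam_c cxV lam0x. Qed.
Lemma cinvE x : cinv x = - lam (cinv x) x.
Proof. by rewrite lamU cVx addr0 opprK. Qed.
Lemma lamE x y : lam x y = y + bs x y.
Proof. by rewrite !bsU addrC addrNK. Qed.
Lemma cE2 x y : c x y = x + y + bs x y.
Proof. by rewrite cE lamE addrA. Qed.
Lemma bsD x y z : bs x (y + z) = bs x y + bs x z.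
Proof. by rewrite !bsU lamD opprD addrACA. Qed.
Lemma bs0 x : bs x 0 = 0.
Proof. by rewrite !bsU lam0 subrr. Qed.
Lemma bsN x y : bs x (- y) = - bs x y.
Proof. by rewrite !bsU lamN [RHS]opprD. Qed.
Lemma bsB x y z : bs x (y - z) = bs x y - bs x z.
Proof. by rewrite bsD bsN. Qed.

Lemma inv_uniq a b : c a b = 0 -> cinv a = b.
Proof. by move=> H; rewrite -[LHS]cx0 -H cA cVx c0x. Qed.
Lemma cinvK x : cinv (cinv x) = x.
Proof. by apply: inv_uniq; rewrite cVx. Qed.
Lemma cinv0 : cinv 0 = 0.
Proof. by apply: inv_uniq; rewrite cx0. Qed.
Lemma cinvM x y : cinv (c x y) = c (cinv y) (cinv x).
Proof. by apply: inv_uniq; rewrite -cA [c y _]cA cxV c0x cxV. Qed.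

Lemma conjE a x : c (c a x) (cinv a) = lam a x + lam a (bs x (cinv a)).
Proof.
rewrite -cA [c x _]cE [c a _]cE (lamD a x) (lamE x (cinv a)) (lamD a (cinv a)).
have -> : a + (lam a x + (lam a (cinv a) + lam a (bs x (cinv a)))) =
   (a + lam a (cinv a)) + (lam a x + lam a (bs x (cinv a))).
  by rewrite !addrA [a + lam a x + _]addrAC.
rewrite -(cE a (cinv a)) cxV add0r. reflexivity.
Qed.

Lemma lam_bs a x y : lam a (bs x y) = bs (c (c a x) (cinv a)) (lam a y).
Proof.
by rewrite (bsU x y) [RHS]bsU !lam_c lamVK lamB.
Qed.


Definition subgrp (S : A -> Prop) := S 0 /\ (forall x y, S x -> S y -> S (x - y)).
Definition linv (S : A -> Prop) := forall a x, S x -> S (lam a x).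

Lemma sg0 S : subgrp S -> S 0. Proof. by case. Qed.
Lemma sgB S x y : subgrp S -> S x -> S y -> S (x - y).
Proof. by case=> _ H; apply: H. Qed.
Lemma sgN S x : subgrp S -> S x -> S (- x).
Proof. by move=> h hx; rewrite -sub0r; apply: sgB => //; apply: sg0. Qed.
Lemma sgD S x y : subgrp S -> S x -> S y -> S (x + y).
Proof. by move=> h hx hy; rewrite -[y]opprK; apply: sgB => //; apply: sgN. Qed.

Lemma gen_add_min (P S : A -> Prop) x :
  subgrp S -> (forall z, P z -> S z) -> gen_add P x -> S x.
Proof.
move=> hS hP; elim=> [z /hP //| |z _ ih|z w _ ih1 _ ih2].
- exact: sg0.
- exact: sgN.
- exact: sgD.
Qed.

Lemma gen_add_sg P : subgrp (gen_add P).
Proof. by split; [apply: ga_0 | move=> x y hx hy; apply: ga_add => //; apply: ga_opp]. Qed.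

Lemma setA_sg : subgrp (setA (A:=A)).
Proof. by []. Qed.

Lemma sg_lam S a : subgrp S -> subgrp (fun z => S (lam a z)).
Proof.
move=> hS; split; first by rewrite lam0; apply: sg0.
by move=> x y hx hy; rewrite lamB; apply: sgB.
Qed.

Lemma star_gen X Y x y : X x -> Y y -> star_set circ X Y (bs x y).
Proof. by move=> hx hy; apply: ga_in; exists x, y; rewrite BE. Qed.

Lemma star_ind X Y (S : A -> Prop) z : subgrp S ->
  (forall x y, X x -> Y y -> S (bs x y)) -> star_set circ X Y z -> S z.
Proof.
move=> hS h; apply: gen_add_min => // w [x [y [hx hy ->]]]; rewrite BE; exact: h.
Qed.

Lemma star_mono (X X' Y Y' : A -> Prop) z :
  (forall x, X x -> X' x) -> (forall y, Y y -> Y' y) ->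
  star_set circ X Y z -> star_set circ X' Y' z.
Proof.
move=> hX hY; apply: star_ind; first exact: gen_add_sg.
by move=> x y hx hy; apply: star_gen; [apply: hX | apply: hY].
Qed.

Local Notation R := (right_series circ).

Lemma R_sg k : subgrp (R k).
Proof. by case: k => [|k] //=; apply: gen_add_sg. Qed.

Lemma R_dec k x : R k.+1 x -> R k x.
Proof.
elim: k x => [//|k ih] x /=.
by apply: star_mono => // y; apply: ih.
Qed.

Lemma R_star k x y : R k x -> R k.+1 (bs x y).
Proof. by move=> hx; apply: star_gen. Qed.

Lemma R_lam k : linv (R k).
Proof.
elim: k => [//|k ih] a x /=.
move=> hx; apply: (@star_ind (R k) (@setA A) (fun z => star_set circ (R k) (@setA A) (lam a z)) x _ _ hx).
  exact/sg_lam/gen_add_sg.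
move=> u v hu _; rewrite lam_bs; apply: star_gen => //.
rewrite conjE; apply: sgD; first exact: R_sg.
  exact: ih.
apply: ih; apply: R_dec; exact: R_star.
Qed.

Lemma R_lstar k a x : R k x -> R k (bs a x).
Proof.
move=> hx; rewrite bsU; apply: sgB; [exact: R_sg | exact: R_lam | done].
Qed.

Lemma R_conj k a x : R k x -> R k (c (c a x) (cinv a)).
Proof.
move=> hx; rewrite conjE; apply: sgD; first exact: R_sg.
  exact: R_lam.
apply: R_lam; apply: R_dec; exact: R_star.
Qed.

Lemma R_inv k x : R k x -> R k (cinv x).
Proof. by move=> hx; rewrite cinvE; apply: sgN; [exact: R_sg | exact: R_lam]. Qed.

Lemma R_c k x y : R k x -> R k y -> R k (c x y).
Proof. by move=> hx hy; rewrite cE; apply: sgD; [exact: R_sg | done | exact: R_lam]. Qed.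


Lemma ideal_of (S : A -> Prop) : subgrp S -> linv S ->
  (forall x y, S x -> S (bs x y)) -> is_ideal circ cinv S.
Proof.
move=> hS hL hR; rewrite /is_ideal LE.
split; first exact: sg0.
split; first by move=> x y; apply: sgB.
split; first exact: hL.
split; first by move=> a x hx; rewrite addrC addKr.
split.
  move=> x y hx hy; rewrite cE2; apply: sgD => //; last exact: hR.
  apply: sgD => //; rewrite cinvE; apply: sgN => //; exact: hL.
move=> a x hx; rewrite conjE; apply: sgD => //; first exact: hL.
by apply: hL; apply: hR.
Qed.

Lemma ideal_sg S : is_ideal circ cinv S -> subgrp S.
Proof. by case=> h0 [hB' _]. Qed.

Lemma ideal_lam S a x : is_ideal circ cinv S -> S x -> S (lam a x).
Proof. by rewrite /is_ideal LE => -[_ [_ [h _]]]; apply: h. Qed.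

Lemma ideal_cinvB S x y : is_ideal circ cinv S -> S x -> S y -> S (c x (cinv y)).
Proof. by case=> _ [_ [_ [_ [h _]]]]; apply: h. Qed.

Lemma ideal_inv S x : is_ideal circ cinv S -> S x -> S (cinv x).
Proof.
move=> hI hx; rewrite -[cinv x]c0x; apply: ideal_cinvB => //.
exact: (sg0 (ideal_sg hI)).
Qed.

Lemma ideal_c S x y : is_ideal circ cinv S -> S x -> S y -> S (c x y).
Proof.
move=> hI hx hy; rewrite -[y]cinvK; apply: ideal_cinvB => //; exact: ideal_inv.
Qed.

Lemma icm_E I x y : in_center_mod circ I x -> I (bs x y) /\ I (bs y x).
Proof. by rewrite /in_center_mod BE => /(_ y) [h1 h2 _]. Qed.

Lemma icm_I (I : A -> Prop) x : I 0 ->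
  (forall y, I (bs x y) /\ I (bs y x)) -> in_center_mod circ I x.
Proof.
move=> h0 h y; rewrite BE; have [h1 h2] := h y; split => //.
by rewrite /addcomm [x + y - x]addrAC subrr add0r subrr.
Qed.

Lemma icm_ext (I J : A -> Prop) x : (forall z, I z <-> J z) ->
  in_center_mod circ I x -> in_center_mod circ J x.
Proof. by move=> hE h y; case: (h y) => h1 h2 h3; split; apply/hE. Qed.

Definition chain (X : A -> Prop) := exists M (D : nat -> A -> Prop),
  [/\ (forall x, D 0%N x <-> X x), (forall x, D M x <-> x = 0),
      (forall p, (p <= M)%N -> is_ideal circ cinv (D p)),
      (forall p, (p < M)%N -> forall x, D p.+1 x -> D p x) &
      (forall p, (p < M)%N -> forall x, D p x -> in_center_mod circ (D p.+1) x)].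

Lemma chain_ext X X' : (forall x, X x <-> X' x) -> chain X -> chain X'.
Proof.
move=> hE [M [D [h0 h1 h2 h3 h4]]]; exists M, D; split => //.
move=> x; split=> [/h0/hE // | /hE/h0 //].
Qed.

Lemma chain_base X : is_ideal circ cinv X -> (forall x, X x <-> x = 0) -> chain X.
Proof.
move=> hI hX; exists 0%N, (fun _ => X); split => //.
Qed.

Lemma chain_step Y X : chain Y -> is_ideal circ cinv X -> (forall x, Y x -> X x) ->
  (forall x, X x -> in_center_mod circ Y x) -> chain X.
Proof.
move=> [M [D [h0 h1 h2 h3 h4]]] hI hYX hC.
exists M.+1, (fun p => if p is p'.+1 then D p' else X); split => //.
- by case=> [|p] //= hp; apply: h2.
- case=> [|p] //= hp x.
    by move=> /h0; apply: hYX.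
  by apply: h3.
- case=> [|p] //= hp x; last by apply: h4.
  by move=> /hC; apply: icm_ext => z; apply: iff_sym.
Qed.


Lemma chain_cn : chain (@setA A) -> centrally_nilpotent circ cinv.
Proof.
move=> [M [D [h0 h1 h2 h3 h4]]]; exists M, (fun j => D (M - j)%N); split.
- by move=> x; rewrite subn0.
- by move=> x; rewrite subnn; apply/h0.
- by move=> j hj; apply: h2; rewrite leq_subr.
- move=> j hj x; have -> : (M - j = (M - j.+1).+1)%N by lia.
  by apply: h3; lia.
- move=> j hj x; have -> : (M - j = (M - j.+1).+1)%N by lia.
  by apply: h4; lia.
Qed.

Lemma chain_interval (U : nat -> A -> Prop) N : chain (U N) ->
  (forall i, (i < N)%N -> is_ideal circ cinv (U i)) ->
  (forall i, (i < N)%N -> forall x, U i.+1 x -> U i x) ->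
  (forall i, (i < N)%N -> forall x, U i x -> in_center_mod circ (U i.+1) x) ->
  chain (U 0%N).
Proof.
move=> hN hI hM hC.
suff H : forall j i, (i + j = N)%N -> chain (U i) by apply: (H N).
elim=> [|j ih] i hij.
  by move: hij; rewrite addn0 => ->.
have hi : (i < N)%N by lia.
apply: (chain_step (Y := U i.+1)).
- by apply: ih; lia.
- exact: hI.
- exact: hM.
- exact: hC.
Qed.


Lemma eq_helper (r1 v1 r2 v2 r' v' : A) : r' + v' = v1 - v2 ->
  r1 + v1 - (r2 + v2) = r1 - r2 + r' + v'.
Proof. by move=> e; rewrite -[RHS]addrA e opprD addrACA. Qed.

Section Inner.
Variables (k N : nat) (G : nat -> A -> Prop).
Definition U i := fun z => exists r v, [/\ R k.+1 r, R k v, G i v & z = r + v].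
Hypothesis H0 : forall i, G i 0.
Hypothesis Hsub : forall i v1 v2, R k v1 -> R k v2 -> G i v1 -> G i v2 -> U i (v1 - v2).
Hypothesis Hstar : forall i a v, R k v -> G i v -> U i.+1 (bs a v).
Hypothesis Hmono : forall i x, G i.+1 x -> G i x.
Hypothesis Htop : forall x, G 0%N x.
Hypothesis Hbot : forall x, G N x -> x = 0.

Lemma U_sg i : subgrp (U i).
Proof.
split; first by exists 0, 0; rewrite addr0; split => //; [exact: sg0 (R_sg _) | exact: sg0 (R_sg _)].
move=> _ _ [r1 [v1 [hr1 hv1 hg1 ->]]] [r2 [v2 [hr2 hv2 hg2 ->]]].
have [r' [v' [hr' hv' hg' e]]] := Hsub hv1 hv2 hg1 hg2.
exists (r1 - r2 + r'), v'; split => //; last exact: eq_helper.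
by apply: sgD; [exact: R_sg | apply: sgB => //; exact: R_sg | done].
Qed.

Lemma U_mono i x : U i.+1 x -> U i x.
Proof. by move=> [r [v [h1 h2 h3 ->]]]; exists r, v; split => //; apply: Hmono. Qed.

Lemma U_R i x : U i x -> R k x.
Proof. by move=> [r [v [h1 h2 h3 ->]]]; apply: sgD => //; [exact: R_sg | exact: R_dec]. Qed.

Lemma R1_U i x : R k.+1 x -> U i x.
Proof. by move=> hx; exists x, 0; rewrite addr0; split => //; exact: sg0 (R_sg _). Qed.

Lemma G_U i v : R k v -> G i v -> U i v.
Proof. by move=> h1 h2; exists 0, v; rewrite add0r; split => //; exact: sg0 (R_sg _). Qed.

Lemma U_lam i : linv (U i).
Proof.
move=> a _ [r [v [h1 h2 h3 ->]]]; rewrite lamD; apply: sgD; first exact: U_sg.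
  by apply: R1_U; apply: R_lam.
rewrite lamE; apply: sgD; first exact: U_sg.
  exact: G_U.
by apply: U_mono; apply: Hstar.
Qed.

Lemma U_ideal i : is_ideal circ cinv (U i).
Proof.
apply: ideal_of; [exact: U_sg | exact: U_lam |].
by move=> x y /U_R hx; apply: R1_U; apply: R_star.
Qed.

Lemma U_center i x : U i x -> in_center_mod circ (U i.+1) x.
Proof.
move=> hx; apply: icm_I; first exact: (sg0 (U_sg _)).
move=> y; split.
  by apply: R1_U; apply: R_star; apply: U_R hx.
case: hx => r [v [h1 h2 h3 ->]]; rewrite bsD; apply: sgD; first exact: U_sg.
  by apply: R1_U; apply: R_lstar.
exact: Hstar.
Qed.

Lemma inner_chain : chain (R k.+1) -> chain (R k).
Proof.
move=> hc.
have hc0 : chain (U 0%N).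
  apply: (chain_interval (N := N)).
  - apply: chain_ext hc => x; split; first exact: R1_U.
    by move=> [r [v [h1 h2 /Hbot -> ->]]]; rewrite addr0.
  - by move=> i _; apply: U_ideal.
  - by move=> i _ x; apply: U_mono.
  - by move=> i _ x; apply: U_center.
apply: chain_ext hc0 => x; split; first exact: U_R.
by move=> hx; apply: G_U.
Qed.
End Inner.


Lemma id1 (v1 v2 s t : A) : v1 - v2 = -(t - s) + (v1 + -(v2 + s) + t).
Proof. by rewrite opprB opprD [RHS]addrC addrACA subrr addr0 -addrA subrK. Qed.

Lemma id2 (v X P S T : A) :
  X = -(P - S + T) + ((v + X + P) + -(v + S) + T).
Proof.
rewrite -[v + X + P]addrA [v + (X + P)]addrC addrKA -[X + P - S]addrA.
by rewrite -[X + (P - S) + T]addrA [X + _]addrC addKr.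
Qed.

Lemma cinvE2 x : cinv x = - (x + bs (cinv x) x).
Proof. by rewrite {1}cinvE lamE. Qed.

Lemma outer (m : nat) : is_trivial (R m) ->
  (forall k, chain (R k.+1) -> chain (R k)) -> chain (@setA A).
Proof.
move=> hm hstep.
have hbase : chain (R m).
  apply: chain_base.
    apply: ideal_of; [exact: R_sg | exact: R_lam |].
    by move=> x y hx; apply: R_dec; apply: R_star.
  by move=> x; split; [exact: hm | move=> ->; exact: sg0 (R_sg _)].
suff H : forall j k, (k + j = m)%N -> chain (R k) by apply: (H m 0%N).
elim=> [|j ih] k hk; first by move: hk; rewrite addn0 => ->.
by apply: hstep; apply: ih; lia.
Qed.

Local Notation LS := (left_series circ).

Lemma LS_sg i : subgrp (LS i).
Proof. by case: i => [|i] //=; apply: gen_add_sg. Qed.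

Lemma LS_dec i x : LS i.+1 x -> LS i x.
Proof.
elim: i x => [//|i ih] x /=.
by apply: star_mono => // y; apply: ih.
Qed.

Lemma step_LS nL : is_trivial (LS nL) -> forall k, chain (R k.+1) -> chain (R k).
Proof.
move=> hL k; apply: (inner_chain (N := nL) (G := LS)).
- by move=> i; exact: sg0 (LS_sg _).
- move=> i v1 v2 h1 h2 g1 g2; apply: G_U.
    by apply: sgB => //; exact: R_sg.
  by apply: sgB => //; exact: LS_sg.
- move=> i a v h1 h2; apply: G_U; first exact: R_lstar.
  by apply: star_gen.
- exact: LS_dec.
- by [].
- exact: hL.
Qed.

Local Notation LC := (lower_central circ cinv).

Lemma LC0 i : LC i 0.
Proof. by case: i => [|i] //=; apply: gc_1. Qed.
Lemma LCc i x y : LC i x -> LC i y -> LC i (c x y).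
Proof. by case: i => [|i] //= hx hy; apply: gc_mul. Qed.
Lemma LCinv i x : LC i x -> LC i (cinv x).
Proof. by case: i => [|i] //= hx; apply: gc_inv. Qed.

Lemma gen_circ_mono (P Q : A -> Prop) x : (forall z, P z -> Q z) ->
  gen_circ circ cinv P x -> gen_circ circ cinv Q x.
Proof.
move=> hPQ; elim=> [z /hPQ|||]; [exact: gc_in | exact: gc_1 | |].
- by move=> z _ ih; apply: gc_inv.
- by move=> z w _ ih1 _ ih2; apply: gc_mul.
Qed.

Lemma LC_dec i x : LC i.+1 x -> LC i x.
Proof.
elim: i x => [//|i ih] x /=.
apply: gen_circ_mono => z [u [w [h1 h2 ->]]].
by exists u, w; split => //; apply: ih.
Qed.

Lemma step_LC nC : is_trivial (LC nC) -> forall k, chain (R k.+1) -> chain (R k).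
Proof.
move=> hL k; apply: (inner_chain (N := nC) (G := LC)).
- by move=> i; exact: LC0.
- move=> i v1 v2 h1 h2 g1 g2.
  exists (- (bs v1 (cinv v2) - bs (cinv v2) v2)), (c v1 (cinv v2)); split.
  + apply: sgN; first exact: R_sg.
    apply: sgB; first exact: R_sg.
      exact: R_star.
    by apply: R_star; apply: R_inv.
  + by apply: R_c => //; apply: R_inv.
  + by apply: LCc => //; apply: LCinv.
  + by rewrite [in c v1 _]cE2 [in _ + cinv v2]cinvE2; apply: id1.
- move=> i a v h1 h2.
  set w := c (c a v) (cinv a).
  have ecc : circ_comm circ cinv (cinv a) (cinv v) = c w (cinv v).
    by rewrite /circ_comm !cinvK /w !cA.
  exists (- (lam a (bs v (cinv a)) - bs (cinv v) v + bs w (cinv v))),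
         (circ_comm circ cinv (cinv a) (cinv v)); split.
  + apply: sgN; first exact: R_sg.
    apply: sgD; first exact: R_sg.
      apply: sgB; first exact: R_sg.
        by apply: R_lam; apply: R_star.
      by apply: R_star; apply: R_inv.
    by apply: R_star; apply: R_conj.
  + by rewrite ecc; apply: R_c; [apply: R_conj | apply: R_inv].
  + by apply: gc_in; exists (cinv a), (cinv v); split => //; apply: LCinv.
  + have ew : w = v + bs a v + lam a (bs v (cinv a)) by rewrite /w conjE lamE.
    rewrite ecc cE2 [in w + cinv v]ew [in _ + cinv v](cinvE2 v).
    exact: id2.
- exact: LC_dec.
- by [].
- exact: hL.
Qed.


Lemma gen_circ_min (P S : A -> Prop) x :
  is_ideal circ cinv S -> (forall z, P z -> S z) -> gen_circ circ cinv P x -> S x.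
Proof.
move=> hI hP; elim=> [z /hP //| | z _ ih | z w _ ih1 _ ih2].
- exact: sg0 (ideal_sg hI).
- exact: ideal_inv.
- exact: ideal_c.
Qed.

Lemma comm_formula a y :
  circ_comm circ cinv a y = lam (cinv (c y a)) (bs a y - bs y a).
Proof.
rewrite /circ_comm -cinvM [c (cinv _) (c a y)]cE {1}cinvE addrC -lamB.
f_equal.
by rewrite !cE2 [y + a]addrC opprD addrACA subrr add0r.
Qed.

Section CN.
Variables (n : nat) (I : nat -> A -> Prop).
Hypotheses (h0 : forall x, I 0%N x <-> x = 0) (hn : forall x, I n x)
  (hid : forall j, (j <= n)%N -> is_ideal circ cinv (I j))
  (hC : forall j, (j < n)%N -> forall x, I j.+1 x -> in_center_mod circ (I j) x).

Lemma LS_in j x : (j <= n)%N -> LS j x -> I (n - j)%N x.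
Proof.
elim: j x => [|j ih] x hj; first by rewrite subn0.
move=> /=; apply: star_ind; first by apply: ideal_sg; apply: hid; rewrite leq_subr.
move=> a y _ hy.
have hy' := ih y (ltnW hj) hy.
have e : (n - j = (n - j.+1).+1)%N by lia.
rewrite e in hy'.
have hlt : (n - j.+1 < n)%N by lia.
have [_ ?] := icm_E a (hC hlt hy'); done.
Qed.

Lemma RS_in j x : (j <= n)%N -> R j x -> I (n - j)%N x.
Proof.
elim: j x => [|j ih] x hj; first by rewrite subn0.
move=> /=; apply: star_ind; first by apply: ideal_sg; apply: hid; rewrite leq_subr.
move=> y a hy _.
have hy' := ih y (ltnW hj) hy.
have e : (n - j = (n - j.+1).+1)%N by lia.
rewrite e in hy'.
have hlt : (n - j.+1 < n)%N by lia.
have [? _] := icm_E a (hC hlt hy'); done.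
Qed.

Lemma LC_in j x : (j <= n)%N -> LC j x -> I (n - j)%N x.
Proof.
elim: j x => [|j ih] x hj; first by rewrite subn0.
move=> /=; apply: gen_circ_min; first by apply: hid; rewrite leq_subr.
move=> z [a [y [_ hy ->]]].
have hy' := ih y (ltnW hj) hy.
have e : (n - j = (n - j.+1).+1)%N by lia.
rewrite e in hy'.
have hlt : (n - j.+1 < n)%N by lia.
have hI : is_ideal circ cinv (I (n - j.+1)%N) by apply: hid; rewrite leq_subr.
have [h1 h2] := icm_E a (hC hlt hy').
rewrite comm_formula; apply: ideal_lam => //.
by apply: sgB => //; apply: ideal_sg.
Qed.

End CN.

Lemma cn_all : centrally_nilpotent circ cinv ->
  star_nilpotent circ /\ circ_nilpotent circ cinv.
Proof.
move=> [n [I [h0 hn hid hinc hC]]].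
split; first split.
- by exists n => x /(LS_in hn hid hC (leqnn n)); rewrite subnn => /h0.
- by exists n => x /(RS_in hn hid hC (leqnn n)); rewrite subnn => /h0.
- by exists n => x /(LC_in hn hid hC (leqnn n)); rewrite subnn => /h0.
Qed.

Lemma all_cn1 : star_nilpotent circ -> centrally_nilpotent circ cinv.
Proof.
move=> [[nL hL] [m hm]]; apply: chain_cn; apply: (outer hm).
exact: step_LS hL.
Qed.

Lemma all_cn2 : right_star_nilpotent circ -> circ_nilpotent circ cinv ->
  centrally_nilpotent circ cinv.
Proof.
move=> [m hm] [nC hC]; apply: chain_cn; apply: (outer hm).
exact: step_LC hC.
Qed.

End Brace.

Theorem mainTheorem9 (A : zmodType) (circ : A -> A -> A) (cinv : A -> A)
  (hB : is_skew_brace circ cinv) :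
  (star_nilpotent circ <-> right_star_nilpotent circ /\ circ_nilpotent circ cinv) /\
  (right_star_nilpotent circ /\ circ_nilpotent circ cinv <-> centrally_nilpotent circ cinv).
Proof.
split; split.
- move=> h; have [[_ hr] hc] := cn_all hB (all_cn1 hB h); by split.
- by move=> [hr hc]; have [] := cn_all hB (all_cn2 hB hr hc).
- by move=> [hr hc]; apply: all_cn2.
- by move=> h; have [[_ hr] hc] := cn_all hB h; split.
Qed.
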